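(* Let $\mathcal{G}=(\mathcal{V},\mathcal{E})$ be connected, $c\in\mathbb{R}^n$, $\bar c=\frac1n\sum_ic_i$, and $\epsilon>0$. Set $x^0=c$ and for $t\ge0$ choose $e=(i,j)\in\mathcal{E}$ uniformly at random (independently across iterations) and set $x^{t+1}=x^t$ except: if $x_i^t\le x_j^t-\epsilon$ then $x_i^{t+1}=x_i^t+\epsilon/2$, $x_j^{t+1}=x_j^t-\epsilon/2$; if $x_j^t\le x_i^t-\epsilon$ then $x_i^{t+1}=x_i^t-\epsilon/2$, $x_j^{t+1}=x_j^t+\epsilon/2$. Let $\Delta^t(\epsilon)=\frac1m\big|\{(i,j)\in\mathcal{E}:|x_i^t-x_j^t|\ge\epsilon\}\big|$ and $\delta^k(\epsilon)=\frac1k\sum_{t=0}^{k-1}\mathbb{E}[\Delta^t(\epsilon)]$. Then for all $k\ge1$ $$\delta^k(\epsilon)\le\frac{2\|c-\bar c\mathbf{1}\|^2}{k\epsilon^2}.$$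
   Context: $\mathcal{G}$ is an undirected graph with vertices $\mathcal{V}=\{1,\dots,n\}$ and $m=|\mathcal{E}|$ edges, each edge $e=(i,j)$ having an arbitrary but fixed orientation. $\mathbf{1}$ is the all-ones vector and $\|\cdot\|$ the Euclidean norm. (The bound $2\|c-\bar c\mathbf 1\|^2$ equals $4(D(y^* )-D(y^0))$ for the dual function $D(y)=-(\mathbf{A}c)^\top y-\tfrac12\|\mathbf{A}^\top y\|^2$ with $y^0=0$, $\mathbf{A}$ the edge–vertex incidence matrix.) *)

(* Defs.v *)
From HB Require Import structures.
From mathcomp Require Import all_boot all_order all_algebra.
Set Implicit Arguments. Unset Strict Implicit. Unset Printing Implicit Defensive.
Import Order.TTheory GRing.Theory Num.Theory.
Local Open Scope ring_scope.

Section Gossip.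
Variables (R : realFieldType) (n m : nat).

(* A graph on vertices 'I_n with m edges; edge k has fixed orientation E k = (i,j). *)
Definition simple_graph (E : 'I_m -> 'I_n * 'I_n) : Prop :=
  injective E /\ (forall k, (E k).1 != (E k).2) /\
  (forall k l, E k != ((E l).2, (E l).1)).

Definition adj (E : 'I_m -> 'I_n * 'I_n) : rel 'I_n :=
  fun i j => [exists k, (E k == (i, j)) || (E k == (j, i))].

Definition connected_graph (E : 'I_m -> 'I_n * 'I_n) : Prop :=
  forall i j : 'I_n, connect (adj E) i j.

Definition step (eps : R) (e : 'I_n * 'I_n) (x : 'I_n -> R) : 'I_n -> R :=
  fun v =>
    let i := e.1 in let j := e.2 in
    if x i <= x j - eps then
      (if v == i then x v + eps / 2 else if v == j then x v - eps / 2 else x v)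
    else if x j <= x i - eps then
      (if v == i then x v - eps / 2 else if v == j then x v + eps / 2 else x v)
    else x v.

Definition traj (eps : R) (E : 'I_m -> 'I_n * 'I_n) (c : 'I_n -> R)
  (s : seq 'I_m) : 'I_n -> R :=
  foldl (fun x k => step eps (E k) x) c s.

Definition Delta (eps : R) (E : 'I_m -> 'I_n * 'I_n) (x : 'I_n -> R) : R :=
  (#|[pred k : 'I_m | eps <= `|x (E k).1 - x (E k).2|]|)%:R / m%:R.

(* E[Delta^t]: edges chosen i.i.d. uniformly, so the expectation is the
   average over all m^t sequences of edge choices of length t. *)
Definition expDelta (eps : R) (E : 'I_m -> 'I_n * 'I_n) (c : 'I_n -> R)
  (t : nat) : R :=
  (\sum_(w : {ffun 'I_t -> 'I_m}) Delta eps E (traj eps E c [seq w i | i <- enum 'I_t]))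
    / (m ^ t)%:R.

Definition delta (eps : R) (E : 'I_m -> 'I_n * 'I_n) (c : 'I_n -> R) (k : nat) : R :=
  (\sum_(t < k) expDelta eps E c t) / k%:R.

Definition mean (c : 'I_n -> R) : R := (\sum_i c i) / n%:R.

Definition sqdist_mean (c : 'I_n -> R) : R := \sum_i (c i - mean c) ^+ 2.

End Gossip.

(* Main.v *)
Require Import Defs.
From HB Require Import structures.
From mathcomp Require Import all_boot all_order all_algebra.
From mathcomp Require Import lra ring.
Set Implicit Arguments. Unset Strict Implicit. Unset Printing Implicit Defensive.
Import Order.TTheory GRing.Theory Num.Theory.
Local Open Scope ring_scope.

Definition W (R : realFieldType) (n : nat) (mu : R) (x : 'I_n -> R) : R :=
  \sum_i (x i - mu) ^+ 2.

Lemma sum2 (R : realFieldType) (n : nat) (f g : 'I_n -> R) (i j : 'I_n) :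
  i != j -> (forall v, v != i -> v != j -> f v = g v) ->
  \sum_v f v = \sum_v g v + (f i - g i) + (f j - g j).
Proof.
move=> ij H.
have h : \sum_v (f v - g v) = (f i - g i) + (f j - g j).
  rewrite (bigD1 i) //= (bigD1 j) //=; last by rewrite eq_sym.
  rewrite big1 ?addr0 // => v /andP[vi vj].
  by rewrite H // subrr.
by rewrite sumrB in h; rewrite -addrA -h addrC subrK.
Qed.

Lemma stepW (R : realFieldType) (n : nat) (mu eps : R) (e : 'I_n * 'I_n) (x : 'I_n -> R) :
  0 < eps ->
  W mu (step eps e x) <= W mu x - eps ^+ 2 / 2 * (eps <= `|x e.1 - x e.2|)%R%:R.
Proof.
move=> he; case: e => i j /=.
rewrite /W.
have [h1|h1] := boolP (x i <= x j - eps).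
  under eq_bigr => v _ do rewrite /step /= ifT //.
  have ij : i != j.
    by apply/eqP => eij; move: h1; rewrite eij; lra.
  have -> : eps <= `|x i - x j|.
    by rewrite distrC ger0_norm; lra.
  rewrite (sum2 ij (g := fun v => (x v - mu) ^+ 2)); last first.
    by move=> v vi vj; rewrite (negbTE vi) (negbTE vj).
  have ji : (j == i) = false by rewrite eq_sym; apply/negbTE.
  rewrite !eqxx ji /=.
  nra.
have [h2|h2] := boolP (x j <= x i - eps).
  under eq_bigr => v _ do rewrite /step /= ifF ?(negbTE h1) // ifT //.
  have ij : i != j.
    by apply/eqP => eij; move: h2; rewrite eij; lra.
  have -> : eps <= `|x i - x j|.
    by rewrite ger0_norm; lra.
  rewrite (sum2 ij (g := fun v => (x v - mu) ^+ 2)); last first.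
    by move=> v vi vj; rewrite (negbTE vi) (negbTE vj).
  have ji : (j == i) = false by rewrite eq_sym; apply/negbTE.
  rewrite !eqxx ji.
  have hh : 0 <= eps * (x i - eps - x j) by apply: mulr_ge0; lra.
  rewrite -[true%:R]/(1:R) mulr1; nra.
under eq_bigr => v _ do rewrite /step /= ifF ?(negbTE h1) // ifF ?(negbTE h2) //.
have -> : eps <= `|x i - x j| = false.
  apply/negbTE; rewrite -ltNge ltr_norml.
  move: h1 h2; rewrite -!ltNge => h1 h2; apply/andP; split; lra.
by rewrite -[false%:R]/(0:R) mulr0 subr0.
Qed.

Lemma sum_ffunS (R : realFieldType) (m t : nat) (F : seq 'I_m -> R) :
  \sum_(w : {ffun 'I_t.+1 -> 'I_m}) F [seq w i | i <- enum 'I_t.+1] =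
  \sum_(j : 'I_m) \sum_(w : {ffun 'I_t -> 'I_m}) F (j :: [seq w i | i <- enum 'I_t]).
Proof.
rewrite pair_big /=.
pose g (p : 'I_m * {ffun 'I_t -> 'I_m}) : {ffun 'I_t.+1 -> 'I_m} :=
  [ffun i => if unlift ord0 i is Some i' then p.2 i' else p.1].
pose h (w : {ffun 'I_t.+1 -> 'I_m}) : 'I_m * {ffun 'I_t -> 'I_m} :=
  (w ord0, [ffun i => w (lift ord0 i)]).
rewrite (reindex g); last first.
  exists h => [p _|w _].
    case: p => a f; rewrite /h /g /= ffunE unlift_none; congr (_, _).
    by apply/ffunP => i; rewrite !ffunE liftK.
  apply/ffunP => i; rewrite /g /h !ffunE.
  by case: unliftP => [j ->|->]; rewrite ?ffunE.
apply: eq_bigr => -[a f] _ /=.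
rewrite enum_ordSl /= -map_comp /g ffunE unlift_none; congr (F (_ :: _)).
by apply: eq_map => i /=; rewrite ffunE liftK.
Qed.

Lemma aux (R : realFieldType) (a d : R) : a != 0 -> 2 / a * (a / 2 * d) = d.
Proof. by move=> h; field. Qed.

Lemma aux2 (R : realFieldType) (x a b : R) : a != 0 -> b != 0 -> x / (a * b) = x / b / a.
Proof. by move=> ha hb; field; rewrite ha hb.
Qed.

Section Main.
Variables (R : realFieldType) (n m : nat) (E : 'I_m -> 'I_n * 'I_n) (eps mu : R).
Hypothesis (hm : (0 < m)%N) (he : 0 < eps).

Lemma W_ge0 (x : 'I_n -> R) : 0 <= W mu x.
Proof. by apply: sumr_ge0 => i _; apply: sqr_ge0. Qed.

Lemma avgW (x : 'I_n -> R) :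
  (\sum_k W mu (step eps (E k) x)) / m%:R <= W mu x - eps ^+ 2 / 2 * Delta eps E x.
Proof.
have hm' : 0 < m%:R :> R by rewrite ltr0n.
rewrite ler_pdivrMr //.
apply: le_trans (ler_sum _ (fun k _ => stepW mu (E k) x he)) _.
rewrite sumrB sumr_const card_ord -mulr_sumr /Delta.
rewrite -sum1_card natr_sum.
rewrite mulrBl mulr_natr lerD2l lerN2 -[_ * _ * m%:R]mulrA divfK ?gt_eqF // big_mkcond /=.
rewrite le_eqVlt; apply/orP; left; apply/eqP; congr (_ * _); apply: eq_bigr => k _.
by rewrite inE; case: (_ <= _).
Qed.

Lemma expDelta0 (c : 'I_n -> R) : expDelta eps E c 0 = Delta eps E c.
Proof.
rewrite /expDelta expn0 divr1.
have -> : \sum_(w : {ffun 'I_0 -> 'I_m}) Delta eps E (traj eps E c [seq w i | i <- enum 'I_0])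
   = \sum_(w : {ffun 'I_0 -> 'I_m}) Delta eps E c.
  apply: eq_bigr => w _; rewrite (_ : [seq w i | i <- enum (ordinal 0)] = [::]) //.
  by apply: size0nil; rewrite size_map size_enum_ord.
by rewrite sumr_const card_ffun !card_ord expn0 mulr1n.
Qed.

Lemma expDeltaS (c : 'I_n -> R) t :
  expDelta eps E c t.+1 = (\sum_j expDelta eps E (step eps (E j) c) t) / m%:R.
Proof.
rewrite /expDelta (@sum_ffunS _ _ t (fun s => Delta eps E (traj eps E c s))) -mulr_suml expnSr natrM invfM mulrA.
by [].
Qed.

Lemma mainBound k : forall c : 'I_n -> R,
  \sum_(t < k) expDelta eps E c t <= 2 * W mu c / eps ^+ 2.
Proof.
elim: k => [|k IH] c.
  rewrite big_ord0; apply: divr_ge0; last by apply: exprn_ge0; apply: ltW.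
  by apply: mulr_ge0 => //; apply: W_ge0.
rewrite big_ord_recl expDelta0.
under eq_bigr => t _ do rewrite lift0 expDeltaS.
rewrite -mulr_suml exchange_big /=.
have hm' : 0 < m%:R :> R by rewrite ltr0n.
have he2 : 0 < eps ^+ 2 by apply: exprn_gt0.
have H1 : (\sum_j \sum_(t < k) expDelta eps E (step eps (E j) c) t) / m%:R <=
          (\sum_j 2 * W mu (step eps (E j) c) / eps ^+ 2) / m%:R.
  by rewrite ler_pM2r ?invr_gt0 //; apply: ler_sum => j _; apply: IH.
apply: le_trans (lerD (lexx _) H1) _.
rewrite -mulr_suml -mulr_sumr.
have H2 := avgW c.
have -> : 2 * (\sum_j W mu (step eps (E j) c)) / eps ^+ 2 / m%:R =
   2 / eps ^+ 2 * ((\sum_j W mu (step eps (E j) c)) / m%:R).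
  by rewrite !mulrA; congr (_ * _); apply: mulrAC.
apply: le_trans (lerD (lexx _) (ler_wpM2l _ H2)) _.
  by apply: divr_ge0 => //; apply: ltW.
have hD : 2 / eps ^+ 2 * (eps ^+ 2 / 2 * Delta eps E c) = Delta eps E c.
  by apply: aux; rewrite gt_eqF.
rewrite mulrBr hD addrC subrK mulrAC.
by [].
Qed.

End Main.

Theorem mainTheorem20 (R : realFieldType) (n m : nat)
  (E : 'I_m -> 'I_n * 'I_n) (c : 'I_n -> R) (eps : R) (k : nat) :
  simple_graph E -> connected_graph E -> (0 < m)%N ->
  0 < eps -> (1 <= k)%N ->
  delta eps E c k <= 2 * sqdist_mean c / (k%:R * eps ^+ 2).
Proof.
move=> _ _ hm he hk.
have hk' : 0 < k%:R :> R by rewrite ltr0n.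
rewrite /delta /sqdist_mean.
have := mainBound E (mean c) hm he k c; rewrite /W => H.
rewrite aux2 ?gt_eqF ?exprn_gt0 // ler_pM2r ?invr_gt0 //.
Qed.
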